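(* Let $G$ be a finite group and let $p\in\pi(G)$ be a prime with $p\in\mu(G)$. Then $p^{p-2}$ divides $\kappa(G)$.
   Context: For a finite group $G$, the power graph $\mathcal{P}(G)$ is the simple undirected graph with vertex set $G$, two distinct vertices $x,y$ being adjacent iff $\langle x\rangle\subseteq\langle y\rangle$ or $\langle y\rangle\subseteq\langle x\rangle$; $\kappa(G)$ is the number of spanning trees of $\mathcal{P}(G)$. $\pi(G)$ is the set of prime divisors of $|G|$. $\pi_e(G)$ is the set of orders of elements of $G$, and $\mu(G)$ is the set of elements of $\pi_e(G)$ that are maximal with respect to divisibility. *)

(* Defs.v *)
From mathcomp Require Import all_boot all_fingroup.
Set Implicit Arguments. Unset Strict Implicit. Unset Printing Implicit Defensive.
Local Open Scope group_scope.

Section PowerGraph.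
Variable gT : finGroupType.

Definition power_adj (x y : gT) : bool :=
  (x != y) && ((<[x]> \subset <[y]>) || (<[y]> \subset <[x]>)).

Definition power_edges (G : {set gT}) : {set {set gT}} :=
  [set e | [exists x in G, exists y in G, (e == [set x; y]) && power_adj x y]].

Definition edge_rel (E : {set {set gT}}) : rel gT := fun x y => [set x; y] \in E.

(* T is a spanning tree of P(G): a set of edges of P(G) that is connected on
   the vertex set G and acyclic (no edge of T lies on a cycle in T, i.e. the
   endpoints of each edge are disconnected once that edge is removed). *)
Definition power_spanning_tree (G : {set gT}) (T : {set {set gT}}) : bool :=
  [&& T \subset power_edges G,
      [forall x in G, forall y in G, connect (edge_rel T) x y] &
      [forall e in T, forall x, forall y,
         (e == [set x; y]) ==> ~~ connect (edge_rel (T :\ e)) x y]].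

Definition kappa (G : {set gT}) : nat :=
  #|[set T : {set {set gT}} | power_spanning_tree G T]|.

Definition pi_e (G : {set gT}) : pred nat := fun n => [exists x in G, #[x] == n].

Definition mu (G : {set gT}) : pred nat :=
  fun n => (n \in pi_e G) && [forall y in G, (n %| #[y]) ==> (#[y] == n)].

End PowerGraph.

(* Main.v *)
Require Import Defs.
From mathcomp Require Import all_boot all_fingroup all_algebra.
From mathcomp Require Import zify ring.
Set Implicit Arguments. Unset Strict Implicit. Unset Printing Implicit Defensive.

Lemma connect_inv (T : finType) (e : rel T) (Q : T -> Prop) x y :
  Q x -> (forall a b, Q a -> e a b -> Q b) -> connect e x y -> Q y.
Proof.
move=> Qx H /connectP [p pth ->]; elim: p x Qx pth => //= b p IH a Qa /andP[eab pth].
exact: IH (H _ _ Qa eab) pth.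
Qed.

Lemma connect_hom (T : finType) (e e' : rel T) (f : T -> T) x y :
  (forall a b, e a b -> connect e' (f a) (f b)) -> connect e x y -> connect e' (f x) (f y).
Proof.
move=> H; apply: (connect_inv (Q := fun z => connect e' (f x) (f z))) => // a b h1 h2.
exact: connect_trans h1 (H _ _ h2).
Qed.

Section Graph.
Variable gT : finGroupType.
Implicit Types (F A : {set {set gT}}) (C B : {set gT}).

Lemma er_sym F : symmetric (edge_rel F).
Proof. by move=> x y; rewrite /edge_rel setUC. Qed.

Lemma conn_sym F : connect_sym (edge_rel F).
Proof. exact/sym_connect_sym/er_sym. Qed.

Lemma conn_mono F F' x y : F \subset F' ->
  connect (edge_rel F) x y -> connect (edge_rel F') x y.
Proof.
move=> sF; apply: connect_sub => a b h; apply: connect1; exact: (subsetP sF).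
Qed.

Lemma set2_eq (x y u v : gT) : [set x; y] = [set u; v] ->
  (x = u /\ y = v) \/ (x = v /\ y = u).
Proof.
move=> E.
have hx : x \in [set u; v] by rewrite -E set21.
have hy : y \in [set u; v] by rewrite -E set22.
have hu : u \in [set x; y] by rewrite E set21.
have hv : v \in [set x; y] by rewrite E set22.
move: hx hy hu hv; rewrite !inE.
case/orP=> /eqP ex; case/orP=> /eqP ey; subst x y; rewrite ?eqxx ?orbb ?orbT //= => hu hv.
- by left; split => //; apply/eqP; rewrite eq_sym.
- by left.
- by right.
- by right; split => //; apply/eqP; rewrite eq_sym.
Qed.

Definition acyc F := [forall e in F, forall x, forall y,
  (e == [set x; y]) ==> ~~ connect (edge_rel (F :\ e)) x y].
Definition conn_on F C := [forall x in C, forall y in C, connect (edge_rel F) x y].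

Lemma acycP F : reflect (forall x y, [set x; y] \in F ->
   ~~ connect (edge_rel (F :\ [set x; y])) x y) (acyc F).
Proof.
apply: (iffP forall_inP) => [H x y xy | H e eF].
  by have /forallP/(_ x)/forallP/(_ y) := H _ xy; rewrite eqxx.
apply/forallP=> x; apply/forallP=> y; apply/implyP=> /eqP exy.
by move: eF; rewrite exy; apply: H.
Qed.

Lemma conn_onP F C : reflect {in C &, forall x y, connect (edge_rel F) x y} (conn_on F C).
Proof.
apply: (iffP forall_inP) => [H x y xC yC | H x xC].
  by have /forall_inP := H _ xC; apply.
by apply/forall_inP => y yC; apply: H.
Qed.

Lemma acyc_sub F F' : F' \subset F -> acyc F -> acyc F'.
Proof.
move=> sF /acycP H; apply/acycP => x y xy.
apply: contra (H x y (subsetP sF _ xy)); apply: conn_mono.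
exact: setSD.
Qed.


Lemma conn_add F u v a b : connect (edge_rel ([set u; v] |: F)) a b =
  [|| connect (edge_rel F) a b, connect (edge_rel F) a u && connect (edge_rel F) v b
     | connect (edge_rel F) a v && connect (edge_rel F) u b].
Proof.
set c := connect (edge_rel F).
have cT x y z : c x y -> c y z -> c x z by apply: connect_trans.
apply/idP/idP.
  apply: (connect_inv (Q := fun z => [|| c a z, c a u && c v z | c a v && c u z])).
    by rewrite /c connect0.
  move=> a' b' + e'; rewrite /edge_rel in_setU1 in e'.
  case/orP: e' => [/eqP/set2_eq [[-> ->]|[-> ->]] | e'].
  - case/or3P => [h|/andP[h _]|/andP[h _]]; apply/or3P.
    + by apply: Or32; rewrite h /c connect0.
    + by apply: Or32; rewrite h /c connect0.
    + by apply: Or31.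
  - case/or3P => [h|/andP[h _]|/andP[h _]]; apply/or3P.
    + by apply: Or33; rewrite h /c connect0.
    + by apply: Or31.
    + by apply: Or33; rewrite h /c connect0.
  have h : c a' b' by apply: connect1.
  case/or3P => [h1|/andP[h1 h2]|/andP[h1 h2]].
  - by rewrite (cT _ _ _ h1 h).
  - by rewrite h1 (cT _ _ _ h2 h) orbT.
  - by rewrite h1 (cT _ _ _ h2 h) !orbT.
have sF : F \subset [set u; v] |: F by apply: subsetUr.
have euv : edge_rel ([set u; v] |: F) u v by rewrite /edge_rel setU11.
have evu : edge_rel ([set u; v] |: F) v u by rewrite er_sym.
case/or3P => [h|/andP[h1 h2]|/andP[h1 h2]].
- exact: conn_mono h.
- apply: connect_trans (conn_mono sF h1) _.
  exact: connect_trans (connect1 euv) (conn_mono sF h2).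
- apply: connect_trans (conn_mono sF h1) _.
  exact: connect_trans (connect1 evu) (conn_mono sF h2).
Qed.

Definition cls F C z := [set w in C | connect (edge_rel F) z w].
Definition classes F C := [set cls F C z | z in C].

Lemma cls_id F C z : z \in C -> z \in cls F C z.
Proof. by move=> zC; rewrite inE zC connect0. Qed.

Lemma cls_eq F C z w : connect (edge_rel F) z w -> cls F C z = cls F C w.
Proof.
move=> h; apply/setP => t; rewrite !inE.
by rewrite (same_connect (conn_sym F) h).
Qed.

Lemma cls_eqP F C z w : w \in C -> (cls F C z == cls F C w) = connect (edge_rel F) z w.
Proof.
move=> wC; apply/eqP/idP => [E|]; last exact: cls_eq.
by have := cls_id F wC; rewrite -E inE => /andP[].
Qed.

Lemma classes_mem F C B w : B \in classes F C -> w \in B -> B = cls F C w.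
Proof.
by case/imsetP => z zC -> ; rewrite inE => /andP[_ h]; apply: cls_eq.
Qed.

Lemma cls_sub F C z : cls F C z \subset C.
Proof. by apply/subsetP => w; rewrite inE => /andP[]. Qed.


Section Merge.
Variables (F : {set {set gT}}) (C : {set gT}) (u v : gT).
Hypotheses (uC : u \in C) (vC : v \in C) (nuv : ~~ connect (edge_rel F) u v).
Let F' := [set u; v] |: F.
Local Notation c := (connect (edge_rel F)).

Lemma cls_add z : cls F' C z =
  if c z u || c z v then cls F C u :|: cls F C v else cls F C z.
Proof.
have sc := conn_sym F.
have nvu : ~~ c v u by rewrite sc.
apply/setP => w; rewrite inE conn_add.
case hu: (c z u) => /=.
  have e1 : c z w = c u w by rewrite (same_connect sc hu).
  have e2 : c z v = c u v by rewrite (same_connect sc hu).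
  rewrite e1 e2 (negbTE nuv) /= !inE.
  by case: (w \in C); rewrite //= ?orbF.
case hv: (c z v) => /=.
  have e1 : c z w = c v w by rewrite (same_connect sc hv).
  rewrite e1 !inE.
  by case: (w \in C); rewrite //= orbC.
by rewrite !inE; case: (c z w); rewrite ?andbT ?andbF /=.
Qed.

Lemma cls_uv : cls F C u != cls F C v.
Proof. by rewrite cls_eqP. Qed.

Lemma classes_add : classes F' C =
  (cls F C u :|: cls F C v) |: (classes F C :\: [set cls F C u; cls F C v]).
Proof.
have sc := conn_sym F.
apply/setP => X; apply/imsetP/idP.
  case=> z zC ->; rewrite cls_add; case: ifP => [_|]; first by rewrite setU11.
  move/norP=> [hu hv]; rewrite !inE (imset_f _ zC) andbT.
  by rewrite cls_eqP // cls_eqP // (negbTE hu) (negbTE hv) orbT.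
rewrite !inE => /orP[/eqP ->|/andP[/norP[h1 h2] /imsetP[z zC eX]]].
  by exists u => //; rewrite cls_add connect0.
exists z => //; rewrite cls_add -eX.
by rewrite eX !cls_eqP // in h1 h2; rewrite (negbTE h1) (negbTE h2).
Qed.

Lemma uv_notin : (cls F C u :|: cls F C v) \notin classes F C.
Proof.
apply/negP => h.
have E : cls F C u :|: cls F C v = cls F C u.
  by apply: classes_mem h _; rewrite inE cls_id.
have : v \in cls F C u by rewrite -E inE (cls_id _ vC) orbT.
by rewrite inE vC /= (negbTE nuv).
Qed.

Lemma uv_in : [set cls F C u; cls F C v] \subset classes F C.
Proof. by apply/subsetP => X; rewrite !inE => /orP[]/eqP->; apply: imset_f. Qed.

Lemma card_classes_add : (#|classes F' C|).+1 = #|classes F C|.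
Proof.
rewrite classes_add cardsU1.
have -> : (cls F C u :|: cls F C v) \notin classes F C :\: [set cls F C u; cls F C v].
  by rewrite inE negb_and uv_notin orbT.
rewrite cardsD (setIidPr uv_in) cards2 cls_uv add1n.
have : #|[set cls F C u; cls F C v]| <= #|classes F C| by apply: subset_leq_card uv_in.
by rewrite cards2 cls_uv => h; rewrite -addn2 subnK.
Qed.

Lemma disj_uv : [disjoint cls F C u & cls F C v].
Proof.
apply/pred0P => w /=; apply/negP => /andP[]; rewrite !inE => /andP[_ h1] /andP[_ h2].
by move: nuv; rewrite /negb (connect_trans h1 _) // conn_sym.
Qed.

Lemma prod_classes_add :
  (\prod_(X in classes F' C) #|X|) * (#|cls F C u| * #|cls F C v|) =
  (\prod_(X in classes F C) #|X|) * (#|cls F C u| + #|cls F C v|).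
Proof.
have cu : cls F C u \in classes F C by apply/imsetP; exists u.
have cv : cls F C v \in classes F C by apply/imsetP; exists v.
rewrite classes_add big_setU1 /=; last by rewrite inE negb_and uv_notin orbT.
rewrite cardsU (disjoint_setI0 disj_uv) cards0 subn0.
rewrite [in RHS](bigD1 (cls F C u)) //=.
rewrite [in RHS](bigD1 (cls F C v)) /=; last by rewrite eq_sym cls_uv andbT.
set P1 := \prod_(X in _ :\: _) _; set P2 := \prod_(X | _) _.
have -> : P1 = P2.
  by apply: eq_bigl => X; rewrite !inE negb_or andbC andbA.
move: (#|_|) (#|_|) P2 => a b q.
nia.
Qed.

Lemma acyc_add : acyc F -> acyc F'.
Proof.
move=> /acycP aF; apply/acycP => x y.
have sc := conn_sym F.
rewrite /F' in_setU1 => /orP[/eqP exy|xyF].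
  rewrite exy setU1K; last first.
    by apply/negP => h; move: nuv; rewrite /negb (connect1 (e := edge_rel F) (x := u) (y := v)).
  by case: (set2_eq exy) => [[-> ->]|[-> ->]]; rewrite // sc.
have ne : [set x; y] != [set u; v].
  by apply/eqP => E; move: xyF; rewrite E => h; move: nuv; rewrite /negb (connect1 (e := edge_rel F) (x := u) (y := v)).
have -> : ([set u; v] |: F) :\ [set x; y] = [set u; v] |: (F :\ [set x; y]).
  by apply/setP => X; rewrite !inE; case: eqP => // ->; rewrite (negbTE ne).
rewrite conn_add; set d := connect (edge_rel (F :\ [set x; y])).
have h := aF _ _ xyF; rewrite -/d in h; rewrite (negbTE h) /=.
have sdF : F :\ [set x; y] \subset F by apply: subD1set.
have exy : c x y by apply: connect1.
apply/negP => /orP[]/andP[h1 h2].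
  move: nuv; rewrite /negb; have -> // : c u v.
  apply: connect_trans (connect_trans _ exy) _.
    by rewrite sc; apply: conn_mono sdF h1.
  by rewrite sc; apply: conn_mono sdF h2.
move: nuv; rewrite /negb; have -> // : c u v.
apply: connect_trans (conn_mono sdF h2) _.
apply: connect_trans _ (conn_mono sdF h1).
by rewrite sc.
Qed.

End Merge.


Definition Kc C := [set e : {set gT} |
  [exists x in C, exists y in C, (x != y) && (e == [set x; y])]].
Definition stC C := [set F : {set {set gT}} | [&& F \subset Kc C, conn_on F C & acyc F]].
Definition Nc C F := #|[set A in stC C | F \subset A]|.
Definition Pc F C := \prod_(X in classes F C) #|X|.

Lemma KcP C x y : ([set x; y] \in Kc C) = [&& x \in C, y \in C & x != y].
Proof.
apply/idP/idP.
  rewrite inE => /exists_inP[a aC /exists_inP[b bC /andP[ab /eqP/set2_eq]]].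
  by case=> [[-> ->]|[-> ->]]; rewrite ?aC ?bC // eq_sym ab.
case/and3P => xC yC xy; rewrite inE; apply/exists_inP; exists x => //.
by apply/exists_inP; exists y => //; rewrite xy eqxx.
Qed.

Lemma KcE C e : e \in Kc C -> exists x y, [/\ e = [set x; y], x \in C, y \in C & x != y].
Proof.
rewrite inE => /exists_inP[a aC /exists_inP[b bC /andP[ab /eqP ->]]].
by exists a, b.
Qed.

Lemma sum_pair_eq1 (a b : gT) :
  \sum_(u : gT) \sum_(v : gT) ((u == a) && (v == b) : nat) = 1.
Proof.
have h1 u : \sum_v ((u == a) && (v == b) : nat) = (u == a).
  rewrite (bigD1 b) //= eqxx andbT [X in _ + X]big1 ?addn0 // => v /negbTE ->.
  by rewrite andbF.
under eq_bigr => u _ do rewrite h1.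
by rewrite (bigD1 a) //= eqxx [X in _ + X]big1 // => u /negbTE ->.
Qed.

Lemma handshake C (E : {set {set gT}}) : E \subset Kc C ->
  \sum_(u : gT) \sum_(v : gT) ((u != v) && ([set u; v] \in E) : nat) = 2 * #|E|.
Proof.
move=> sE.
have step u v : ((u != v) && ([set u; v] \in E) : nat) =
    \sum_(e in E) ((u != v) && ([set u; v] == e) : nat).
  case: (boolP ([set u; v] \in E)) => h /=.
    rewrite (bigD1 _ h) /= eqxx andbT big1 ?addn0 // => e /andP[_ ne].
    by rewrite [[set u; v] == e]eq_sym (negbTE ne) andbF.
  rewrite andbF big1 // => e eE; case: ([set u; v] =P e) => [E'|_]; last by rewrite andbF.
  by move: h; rewrite E' eE.
under eq_bigr => u _ do under eq_bigr => v _ do rewrite step.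
under eq_bigr => u _ do rewrite exchange_big /=.
rewrite exchange_big /= -sum1_card big_distrr /=; apply: eq_bigr => e eE.
have [x [y [-> xC yC xy]]] := KcE (subsetP sE _ eE).
have yx : (y == x) = false by rewrite eq_sym (negbTE xy).
have e2 u v : ((u != v) && ([set u; v] == [set x; y]) : nat) =
   ((u == x) && (v == y) : nat) + ((u == y) && (v == x) : nat).
  case: (boolP ([set u; v] == [set x; y])) => [/eqP/set2_eq [[-> ->]|[-> ->]]|ne].
  - by rewrite (negbTE xy) !eqxx.
  - by rewrite yx !eqxx.
  rewrite andbF; case: (boolP ((u == x) && (v == y))) => [/andP[/eqP eu /eqP ev]|_].
    by move: ne; rewrite eu ev eqxx.
  case: (boolP ((u == y) && (v == x))) => [/andP[/eqP eu /eqP ev]|_] //.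
  by move: ne; rewrite eu ev setUC eqxx.
under eq_bigr => u _ do under eq_bigr => v _ do rewrite e2.
under eq_bigr => u _ do rewrite big_split /=.
by rewrite big_split /= !sum_pair_eq1 muln1.
Qed.


Lemma conn0 (x y : gT) : connect (edge_rel set0) x y -> y = x.
Proof.
by apply: (connect_inv (Q := fun t => t = x)) => // a b _; rewrite /edge_rel inE.
Qed.

Lemma classes0 C : classes set0 C = [set [set z] | z in C].
Proof.
apply: eq_in_imset => z zC; apply/setP => w; rewrite !inE.
apply/andP/eqP => [[_ /conn0 //]|->]; by rewrite zC connect0.
Qed.

Lemma card_classes0 C : #|classes set0 C| = #|C|.
Proof. by rewrite classes0 card_imset //; apply: set1_inj. Qed.

Lemma Pc0 C : Pc set0 C = 1.
Proof.
rewrite /Pc classes0 big1 // => X /imsetP[z _ ->]; exact: cards1.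
Qed.

Lemma edge_count C F : F \subset Kc C -> acyc F -> #|F| + #|classes F C| = #|C|.
Proof.
move: {2}#|F| (erefl #|F|) => k; elim: k F => [|k IH] F cF sK aF.
  by rewrite (cards0_eq cF) cards0 card_classes0.
have [e eF] : exists e, e \in F by apply/card_gt0P; rewrite cF.
have [x [y [exy xC yC xy]]] := KcE (subsetP sK _ eF).
have cF' : #|F :\ e| = k by move: cF; rewrite (cardsD1 e) eF add1n => -[].
have sK' : F :\ e \subset Kc C by apply: subset_trans sK; apply: subD1set.
have aF' : acyc (F :\ e) by apply: acyc_sub aF; apply: subD1set.
have nxy : ~~ connect (edge_rel (F :\ e)) x y.
  by move/acycP: aF => /(_ x y); rewrite -exy; apply.
have := IH _ cF' sK' aF'; rewrite -(card_classes_add xC yC nxy) -exy setD1K //.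
by rewrite cF' cF addnS.
Qed.

Lemma classes_conn C F z0 : z0 \in C -> conn_on F C -> classes F C = [set C].
Proof.
move=> z0C /conn_onP cC; apply/setP => X; rewrite inE.
have clsC z : z \in C -> cls F C z = C.
  move=> zC; apply/setP => w; rewrite inE; case wC: (w \in C) => //=; exact: cC.
apply/imsetP/eqP => [[z zC ->]|->]; first exact: clsC.
by exists z0 => //; rewrite clsC.
Qed.

Lemma conn_classes1 C F : #|classes F C| = 1 -> conn_on F C.
Proof.
move/eqP/cards1P => [X eX]; apply/conn_onP => x y xC yC.
have hx : cls F C x \in classes F C by apply/imsetP; exists x.
have hy : cls F C y \in classes F C by apply/imsetP; exists y.
move: hx hy; rewrite eX !inE => /eqP ex /eqP ey.
by rewrite -(cls_eqP F x yC) ex ey.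
Qed.


Lemma NcE C F : Nc C F = \sum_(A in stC C | F \subset A) 1.
Proof. by rewrite /Nc -sum1_card; apply: eq_bigl => A; rewrite inE. Qed.

Lemma stCP C A : A \in stC C -> [/\ A \subset Kc C, conn_on A C & acyc A].
Proof. by rewrite inE => /and3P. Qed.

Lemma term_eq C F A u v : F \subset A -> A \in stC C ->
  ((u \in C) && ((v \in C) && ~~ connect (edge_rel F) u v)) && ([set u; v] \in A)
  = (u != v) && ([set u; v] \in A :\: F).
Proof.
move=> FA /stCP[sK _ /acycP aA].
apply/idP/idP.
  case/andP => /and3P[uC vC nc] uvA; rewrite !inE uvA andbT.
  apply/andP; split.
    by apply: contra nc => /eqP ->; apply: connect0.
  by apply: contra nc => h; apply: connect1.
rewrite !inE => /andP[uv /andP[nF uvA]]; rewrite uvA andbT.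
have := subsetP sK _ uvA; rewrite KcP => /and3P[-> -> _] /=.
apply: contra (aA _ _ uvA); apply: conn_mono.
apply/subsetP => e eF; rewrite !inE (subsetP FA _ eF) andbT.
by apply: contra nF => /eqP <-.
Qed.

Lemma dcount C F z0 : z0 \in C -> F \subset Kc C -> acyc F -> 
  \sum_(u in C) \sum_(v in C | ~~ connect (edge_rel F) u v) Nc C ([set u; v] |: F)
  = 2 * (#|classes F C| - 1) * Nc C F.
Proof.
move=> z0C sK aF.
have e1 u v : Nc C ([set u; v] |: F) =
    \sum_(A in stC C | F \subset A) ([set u; v] \in A : nat).
  rewrite NcE big_mkcond [RHS]big_mkcond; apply: eq_bigr => A _.
  rewrite subUset sub1set.
  by case: (A \in stC C); case: ([set u; v] \in A); case: (F \subset A).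
under eq_bigr => u _ do under eq_bigr => v _ do rewrite e1.
under eq_bigr => u _ do rewrite exchange_big /=.
rewrite exchange_big /= NcE big_distrr /=; apply: eq_bigr => A /andP[AST FA].
rewrite muln1.
transitivity (\sum_(u : gT) \sum_(v : gT)
   ((u != v) && ([set u; v] \in A :\: F) : nat)).
  rewrite big_mkcond; apply: eq_bigr => u _.
  case uC: (u \in C) => /=; last first.
    by rewrite big1 // => v _; rewrite -(term_eq _ _ FA AST) uC.
  rewrite big_mkcond; apply: eq_bigr => v _ /=.
  rewrite -(term_eq _ _ FA AST) uC /=.
  by case: (_ && _).
have [sKA cA aA] := stCP AST.
rewrite (handshake (C := C)); last by apply: subset_trans sKA; apply: subsetDl.
have hA := edge_count sKA aA.
rewrite (classes_conn z0C cA) cards1 in hA.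
have hF := edge_count sK aF.
rewrite cardsD (setIidPr FA).
have : #|F| <= #|A| by apply: subset_leq_card.
move: hA hF; move: #|A| #|F| #|classes F C| #|C| => a f m n; lia.
Qed.

End Graph.

Section Rat.
Import GRing.Theory Num.Theory.
Local Open Scope ring_scope.
Variable gT : finGroupType.
Implicit Types (F A : {set {set gT}}) (C : {set gT}).

Lemma S1 C F : \sum_(z in C) ((#|cls F C z|)%:R : rat)^-1 = (#|classes F C|)%:R.
Proof.
rewrite (partition_big_imset (cls F C)) /=.
transitivity (\sum_(X in classes F C) (1 : rat)); last by rewrite sumr_const.
apply: eq_bigr => X /imsetP[z0 z0C ->].
rewrite (eq_bigl (fun z => z \in cls F C z0)); last first.
  move=> z /=; rewrite cls_eqP // inE conn_sym.
  by case: (z \in C).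
transitivity (\sum_(z in cls F C z0) ((#|cls F C z0|)%:R : rat)^-1).
  by apply: eq_bigr => z; rewrite inE => /andP[_ h]; rewrite (cls_eq _ h).
rewrite sumr_const -[_ *+ _]mulr_natr mulVf // pnatr_eq0 -lt0n.
by apply/card_gt0P; exists z0; apply: cls_id.
Qed.


Lemma rcount C F :
  \sum_(u in C) \sum_(v in C | ~~ connect (edge_rel F) u v)
     ((Pc ([set u; v] |: F) C)%:R : rat)
  = (Pc F C)%:R * (2 * (#|C|)%:R * ((#|classes F C|)%:R - 1)).
Proof.
set P : rat := (Pc F C)%:R.
set a := fun z => ((#|cls F C z|)%:R : rat).
have apos z : z \in C -> a z != 0.
  move=> zC; rewrite /a pnatr_eq0 -lt0n; apply/card_gt0P; exists z; exact: cls_id.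
have h1 u v : u \in C -> v \in C -> ~~ connect (edge_rel F) u v ->
    ((Pc ([set u; v] |: F) C)%:R : rat) = P * ((a u)^-1 + (a v)^-1).
  move=> uC vC nuv; have := prod_classes_add uC vC nuv.
  move/(congr1 (fun k => (k%:R : rat))); rewrite !natrM natrD -/(a u) -/(a v) -/P.
  rewrite -/(Pc _ _) => E.
  have au := apos _ uC; have av := apos _ vC.
  apply: (mulIf (mulf_neq0 au av)); rewrite E; field.
  by rewrite au av.
have h2 u : u \in C -> \sum_(v in C | ~~ connect (edge_rel F) u v) (a u)^-1
    = ((#|C|)%:R - a u) * (a u)^-1.
  move=> uC; rewrite (eq_bigl (fun v => v \in C :\: cls F C u)); last first.
    by move=> v /=; rewrite !inE; case: (v \in C); rewrite ?andbF ?andbT.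
  rewrite sumr_const -[_ *+ _]mulr_natr mulrC cardsD (setIidPr (cls_sub _ _ _)).
  rewrite natrB //; apply: subset_leq_card; exact: cls_sub.
have h3 u : u \in C -> \sum_(v in C | ~~ connect (edge_rel F) u v) (a v)^-1
    = (#|classes F C|)%:R - 1.
  move=> uC.
  have e1 : \sum_(v in C | connect (edge_rel F) u v) (a v)^-1 = 1.
    rewrite (eq_bigl (fun v => v \in cls F C u)); last first.
      by move=> v /=; rewrite !inE.
    transitivity (\sum_(v in cls F C u) (a u)^-1).
      by apply: eq_bigr => v; rewrite inE => /andP[_ h]; rewrite /a (cls_eq _ h).
    by rewrite sumr_const -[_ *+ _]mulr_natr mulVf // apos.
  by rewrite -S1 [in RHS](bigID (fun v => connect (edge_rel F) u v)) /= e1 addrC addrK.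
transitivity (\sum_(u in C) P * (((#|C|)%:R - a u) * (a u)^-1 +
     ((#|classes F C|)%:R - 1))).
  apply: eq_bigr => u uC; rewrite -(h2 u uC) -(h3 u uC) -big_split /= mulr_sumr.
  by apply: eq_bigr => v /andP[vC nuv]; apply: h1.
rewrite -mulr_sumr; congr (P * _).
transitivity (\sum_(u in C) ((#|C|)%:R * (a u)^-1 + ((#|classes F C|)%:R - 2))).
  apply: eq_bigr => u uC; have au := apos _ uC; field.
  by rewrite au.
rewrite big_split /= -mulr_sumr S1 sumr_const -[_ *+ _]mulr_natr.
ring.
Qed.

End Rat.

Section Cayley.
Import GRing.Theory Num.Theory.
Variable gT : finGroupType.
Implicit Types (F A : {set {set gT}}) (C : {set gT}).

Lemma sum_nat_rat C F :
  (\sum_(u in C) \sum_(v in C | ~~ connect (edge_rel F) u v) Pc ([set u; v] |: F) C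
   = Pc F C * (2 * #|C| * (#|classes F C| - 1)))%N.
Proof.
case: (boolP (#|classes F C| == 0)) => [/eqP m0|m0].
  have C0 : C = set0.
    apply/setP => z; rewrite inE; apply/negP => zC.
    by move: m0; apply/eqP; rewrite -lt0n; apply/card_gt0P; exists (cls F C z); apply: imset_f.
  by rewrite C0 big_pred0 ?cards0 ?muln0 // => u; rewrite inE.
apply/eqP; rewrite -(@eqr_nat rat) natr_sum.
under eq_bigr => u _ do rewrite natr_sum.
rewrite rcount !natrM natrB ?lt0n //.
Qed.


Lemma cayley_main C z0 : z0 \in C -> forall k F, F \subset Kc C -> acyc F ->
  #|classes F C| = k.+1 -> (Nc C F * #|C| = #|C| ^ k * Pc F C)%N.
Proof.
move=> z0C; elim=> [|k IH] F sK aF mF.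
  have cF := conn_classes1 mF.
  have eC := classes_conn z0C cF.
  rewrite /Pc eC big_set1 expn0 mul1n.
  suff -> : Nc C F = 1%N by rewrite mul1n.
  have FST : F \in stC C by rewrite inE sK cF aF.
  rewrite /Nc (_ : [set A in stC C | F \subset A] = [set F]) ?cards1 //.
  apply/setP => A; rewrite inE in_set1; apply/idP/idP => [/andP[AST FA]|/eqP->]; last by rewrite FST subxx.
  have [sKA cA aA] := stCP AST.
  have hA := edge_count sKA aA; have hF := edge_count sK aF.
  rewrite (classes_conn z0C cA) cards1 in hA.
  rewrite mF in hF.
  rewrite eq_sym eqEcard FA /=.
  by move: hA hF; move: #|A| #|F| #|C| => a f n; lia.
have hD := dcount z0C sK aF.
have hR := sum_nat_rat C F.
rewrite mF subn1 /= in hD hR.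
set n := #|C| in hR *.
have hI u v : u \in C -> (v \in C) && ~~ connect (edge_rel F) u v ->
    (Nc C ([set u; v] |: F) * n = n ^ k * Pc ([set u; v] |: F) C)%N.
  move=> uC /andP[vC nuv]; apply: IH.
  - rewrite subUset sub1set sK andbT KcP uC vC /=.
    by apply: contra nuv => /eqP ->; apply: connect0.
  - exact: acyc_add.
  - by have := card_classes_add uC vC nuv; rewrite mF => -[].
have E : (2 * k.+1 * (Nc C F * n) = 2 * k.+1 * (n ^ k.+1 * Pc F C))%N.
  rewrite mulnA -hD big_distrl /=.
  under eq_bigr => u _ do rewrite big_distrl /=.
  transitivity (\sum_(u in C) \sum_(v in C | ~~ connect (edge_rel F) u v)
     (n ^ k * Pc ([set u; v] |: F) C))%N.
    by apply: eq_bigr => u uC; apply: eq_bigr => v hv; apply: hI.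
  under eq_bigr => u _ do rewrite -big_distrr /=.
  rewrite -big_distrr /= hR expnS; lia.
by apply/eqP; rewrite -(eqn_pmul2l (_ : 0 < 2 * k.+1)%N) // E.
Qed.


Lemma cayley C : (0 < #|C|)%N -> (#|stC C| * #|C| = #|C| ^ (#|C|).-1)%N.
Proof.
case/card_gt0P => z0 z0C.
have a0 : acyc (set0 : {set {set gT}}) by apply/acycP => x y; rewrite inE.
have := @cayley_main C z0 z0C (#|C|).-1 set0 (sub0set _) a0.
rewrite card_classes0 Pc0 muln1 prednK; last by apply/card_gt0P; exists z0.
move=> <- //; congr (_ * _)%N.
by rewrite /Nc; apply: eq_card => A; rewrite !inE sub0set andbT.
Qed.

End Cayley.

Section Decomp.
Variable gT : finGroupType.
Variables (G C V : {set gT}) (PE : {set {set gT}}) (o : gT).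
Hypotheses (sCG : C \subset G) (sVG : V \subset G) (oC : o \in C) (oV : o \in V)
  (CV : forall a, a \in C -> a \in V -> a = o)
  (GCV : forall a, a \in G -> (a \in C) || (a \in V))
  (KPE : Kc C \subset PE)
  (PEV : forall a b, [set a; b] \in PE :\: Kc C -> (a \in V) && (b \in V)).

Definition Yset := [set B : {set {set gT}} | [&& B \subset PE :\: Kc C, conn_on B V & acyc B]].
Definition STset := [set T : {set {set gT}} | [&& T \subset PE, conn_on T G & acyc T]].

Let phi z := if z \in C then z else o.
Let psi z := if z \in V then z else o.

Lemma hom1 (A B : {set {set gT}}) x y : A \subset Kc C -> B \subset PE :\: Kc C ->
  connect (edge_rel (A :|: B)) x y -> connect (edge_rel A) (phi x) (phi y).
Proof.
move=> sA sB; apply: connect_hom => a b; rewrite /edge_rel inE => /orP[h|h].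
  have := subsetP sA _ h; rewrite KcP => /and3P[aC bC _].
  by rewrite /phi aC bC; apply: connect1.
have /andP[aV bV] := PEV (subsetP sB _ h).
have po z : z \in V -> phi z = o by move=> zV; rewrite /phi; case: ifP => // zC; apply: CV.
by rewrite !po.
Qed.

Lemma hom2 (A B : {set {set gT}}) x y : A \subset Kc C -> B \subset PE :\: Kc C ->
  connect (edge_rel (A :|: B)) x y -> connect (edge_rel B) (psi x) (psi y).
Proof.
move=> sA sB; apply: connect_hom => a b; rewrite /edge_rel inE => /orP[h|h]; last first.
  have /andP[aV bV] := PEV (subsetP sB _ h).
  by rewrite /psi aV bV; apply: connect1.
have := subsetP sA _ h; rewrite KcP => /and3P[aC bC _].
have po z : z \in C -> psi z = o by move=> zC; rewrite /psi; case: ifP => // zV; apply: CV.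
by rewrite !po.
Qed.


Lemma phiC z : z \in C -> phi z = z. Proof. by rewrite /phi => ->. Qed.
Lemma psiV z : z \in V -> psi z = z. Proof. by rewrite /psi => ->. Qed.

Lemma split_ST T : T \in STset -> (T :&: Kc C \in stC C) && (T :\: Kc C \in Yset).
Proof.
rewrite inE => /and3P[sT cT aT].
have sA : T :&: Kc C \subset Kc C by apply: subsetIr.
have sB : T :\: Kc C \subset PE :\: Kc C by apply: setSD.
have eT : T = (T :&: Kc C) :|: (T :\: Kc C) by rewrite setID.
rewrite !inE sA sB /=.
rewrite (acyc_sub (subsetIl _ _) aT) (acyc_sub (subsetDl _ _) aT) !andbT.
apply/andP; split; apply/conn_onP => x y xX yX.
  rewrite -(phiC xX) -(phiC yX); apply: hom1 sA sB _; rewrite -eT.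
  by move/conn_onP: cT; apply; apply: (subsetP sCG).
rewrite -(psiV xX) -(psiV yX); apply: hom2 sA sB _; rewrite -eT.
by move/conn_onP: cT; apply; apply: (subsetP sVG).
Qed.

Lemma join_ST A B : A \in stC C -> B \in Yset -> A :|: B \in STset.
Proof.
move=> /stCP[sA cA aA]; rewrite inE => /and3P[sB cB aB].
have BK e : e \in B -> e \notin Kc C by move=> eB; have := subsetP sB _ eB; rewrite inE => /andP[].
rewrite inE; apply/and3P; split.
- rewrite subUset (subset_trans sA KPE) /=.
  by apply: subset_trans sB _; apply: subsetDl.
- have to_o z : z \in G -> connect (edge_rel (A :|: B)) z o.
    move=> zG; case/orP: (GCV zG) => h.
      by apply: conn_mono (subsetUl _ _) _; move/conn_onP: cA; apply.
    by apply: conn_mono (subsetUr _ _) _; move/conn_onP: cB; apply.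
  apply/conn_onP => x y xG yG; apply: connect_trans (to_o _ xG) _.
  by rewrite conn_sym; apply: to_o.
apply/acycP => x y; rewrite inE => /orP[eA|eB].
  have eB : [set x; y] \notin B by apply: contraL (subsetP sA _ eA); apply: BK.
  have -> : (A :|: B) :\ [set x; y] = (A :\ [set x; y]) :|: B.
    apply/setP => e; rewrite !inE; case: eqP => [->|_] //=.
    by rewrite (negbTE eB).
  have := subsetP sA _ eA; rewrite KcP => /and3P[xC yC _].
  apply/negP => /(hom1 (subset_trans (subD1set _ _) sA) sB).
  rewrite !phiC //; apply/negP; by move/acycP: aA; apply.
have eA : [set x; y] \notin A by apply/negP => /(subsetP sA); apply/negP; apply: BK.
have -> : (A :|: B) :\ [set x; y] = A :|: (B :\ [set x; y]).
  apply/setP => e; rewrite !inE; case: eqP => [->|_] //=.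
  by rewrite (negbTE eA).
have /andP[xV yV] := PEV (subsetP sB _ eB).
apply/negP => /(hom2 sA (subset_trans (subD1set _ _) sB)).
rewrite !psiV //; apply/negP; by move/acycP: aB; apply.
Qed.


Lemma card_ST : #|STset| = (#|stC C| * #|Yset|)%N.
Proof.
rewrite -sum1_card (partition_big (fun T => T :&: Kc C) (mem (stC C))) /=; last first.
  by move=> T /split_ST/andP[].
rewrite -sum_nat_const; apply: eq_bigr => A AST.
rewrite sum1dep_card.
have [sA _ _] := stCP AST.
have BK B : B \in Yset -> B :&: Kc C = set0.
  rewrite inE => /and3P[sB _ _]; apply/setP => e; rewrite in_setI in_set0.
  by apply/negP => /andP[eB eK]; have := subsetP sB _ eB; rewrite in_setD eK.
have -> : [set T | (T \in STset) && (T :&: Kc C == A)] = [set A :|: B | B in Yset].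
  apply/setP => T; rewrite inE; apply/andP/imsetP.
    case=> TST /eqP eA; exists (T :\: Kc C).
      by have /andP[] := split_ST TST.
    by rewrite -eA setID.
  case=> B BY ->; split; first exact: join_ST.
  by rewrite setIUl (setIidPl sA) BK // setU0.
rewrite card_in_imset // => B1 B2 B1Y B2Y E.
have h B : B \in Yset -> (A :|: B) :\: Kc C = B.
  move=> BY; apply/setP => e; rewrite in_setD in_setU.
  case eK: (e \in Kc C) => /=.
    apply/esym/negP => eB.
    by have := BK _ BY; move/setP/(_ e); rewrite in_setI eB eK in_set0.
  case eA: (e \in A) => //=.
  by have := subsetP sA _ eA; rewrite eK.
by rewrite -(h _ B1Y) E h.
Qed.

End Decomp.

Section Group.
Local Open Scope group_scope.
Variables (gT : finGroupType) (G : {group gT}) (p : nat) (g : gT).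
Hypotheses (pr : prime p) (gG : g \in G) (og : #[g] = p)
  (maxp : forall y, y \in G -> p %| #[y] -> #[y] = p).

Let C : {set gT} := <[g]>.
Let S := C :\ 1.
Let V := G :\: S.

Lemma genS a : a \in S -> <[a]> = C.
Proof.
rewrite !inE => /andP[a1 aC].
have : #[a] %| #[g] by apply: cardSg; rewrite cycle_subG.
rewrite og => /(primeP pr).2 /orP[h|h].
  by move: h; rewrite order_eq1 (negbTE a1).
apply/eqP; rewrite eqEcard cycle_subG aC /=.
by rewrite -/(order a) (eqP h) -og.
Qed.

Lemma adj_inC a b : a \in S -> b \in G -> power_adj a b -> b \in C.
Proof.
move=> aS bG; rewrite /power_adj (genS aS) => /andP[_ /orP[h|h]]; last first.
  by rewrite -cycle_subG.
have : p %| #[b] by rewrite -og; apply: cardSg.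
move/(maxp bG) => ob.
have -> : C = <[b]>.
  by apply/eqP; rewrite eqEcard h /= -/(order b) ob -og.
exact: cycle_id.
Qed.

Lemma power_adj_sym (a b : gT) : power_adj a b = power_adj b a.
Proof. by rewrite /power_adj eq_sym orbC. Qed.


Lemma KPE_g : Kc C \subset power_edges G.
Proof.
apply/subsetP => e /KcE [x [y [-> xC yC xy]]].
have sCG : C \subset G by rewrite cycle_subG.
rewrite inE; apply/exists_inP; exists x; first exact: (subsetP sCG).
apply/exists_inP; exists y; first exact: (subsetP sCG).
rewrite eqxx /power_adj xy /=.
case: (eqVneq x 1) => [->|x1].
  by rewrite cycle1 sub1G.
have xS : x \in S by rewrite !inE x1.
by rewrite (genS xS); apply/orP; right; rewrite cycle_subG.
Qed.

Lemma PEV_g a b : [set a; b] \in power_edges G :\: Kc C -> (a \in V) && (b \in V).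
Proof.
rewrite in_setD => /andP[nK].
rewrite inE => /exists_inP[x xG /exists_inP[y yG /andP[/eqP E adj]]].
rewrite E KcP in nK.
have xy : x != y by move: adj => /andP[].
have xV : x \in V.
  rewrite inE xG andbT; apply/negP => xS.
  have yC := adj_inC xS yG adj.
  by move: nK; rewrite yC xy andbT; move: xS; rewrite !inE => /andP[_ ->].
have yV : y \in V.
  rewrite inE yG andbT; apply/negP => yS.
  rewrite power_adj_sym in adj.
  have xC := adj_inC yS xG adj.
  by move: nK; rewrite xC xy /=; move: yS; rewrite !inE => /andP[_ ->].
by case: (set2_eq E) => [[-> ->]|[-> ->]]; rewrite xV yV.
Qed.

End Group.

Theorem lemma3p5 (gT : finGroupType) (G : {group gT}) (p : nat) :
  p \in \pi(G) -> p \in mu G -> p ^ (p - 2) %| kappa G.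
Proof.
move=> piG muG.
have pr : prime p by move: piG; rewrite mem_primes => /andP[].
move: muG; rewrite unfold_in /mu => /andP[].
rewrite unfold_in /pi_e => /exists_inP[g gG /eqP og] /forall_inP maxp.
have maxp' : forall y, y \in G -> p %| #[y]%g -> #[y]%g = p.
  by move=> y yG h; apply/eqP; exact: (implyP (maxp y yG) h).
set C : {set gT} := <[g]>%g.
set V : {set gT} := G :\: (C :\ 1%g).
have sCG : C \subset G by rewrite cycle_subG.
have oC : (1%g : gT) \in C by apply: group1.
have sVG : V \subset G by apply: subsetDl.
have oV : (1%g : gT) \in V by rewrite !inE eqxx /= group1.
have CV : forall a, a \in C -> a \in V -> a = 1%g.
  by move=> a aC; rewrite !inE aC andbT => /andP[/negPn/eqP].
have GCV : forall a, a \in G -> (a \in C) || (a \in V).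
  by move=> a aG; rewrite !inE aG; case: (a \in C); rewrite ?andbF ?orbT.
have KPE := KPE_g pr gG og.
have PEV := PEV_g pr og maxp'.
have -> : kappa G = #|STset G (power_edges G)| by [].
rewrite (card_ST sCG sVG oC oV CV GCV KPE PEV).
have cC : #|C| = p by [].
have := @cayley _ C; rewrite cC prime_gt0 // => /(_ isT) hc.
have p2 : 1 < p by apply: prime_gt1.
have -> : #|stC C| = p ^ (p - 2).
  apply/eqP; rewrite -(eqn_pmul2r (prime_gt0 pr)) hc -expnSr.
  by rewrite -subSn // subSS subn1.
exact: dvdn_mulr.
Qed.
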